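(* Fix an instance of MCND and an arbitrary partial aggregation $\mathcal{B}^p$ (see context). (i) If $(\bar x,\bar y)$ is a feasible solution of the LP relaxation of the PA formulation built on $\mathcal{B}^p$, then $(x,y)$ defined by $x_{ij}^{\mathcal{K}_n}=\sum_{b\in\mathcal{B}^p:o_b=n}\sum_{D\in\mathcal{G}_b^{ij}}\bar x_{ij}^D$ for every arc $(i,j)\in\mathcal{A}$ and every node $n$ that is the origin of at least one commodity, and $y_{ij}=\bar y_{ij}$, is a feasible solution of the LP relaxation of the FA formulation, with the same objective value. (ii) There exist an instance and a partial aggregation $\mathcal{B}^p$ for which the LP relaxation of FA has a feasible solution that is not the image under this map of any feasible solution of the LP relaxation of PA built on $\mathcal{B}^p$. (That is, PA is stronger than FA.)
   Context: An instance of MCND consists of a directed graph $G=(\mathcal{N},\mathcal{A})$, a finite set $\mathcal{K}$ of commodities, each $k\in\mathcal{K}$ having an origin $o^k\in\mathcal{N}$, a destination $s^k\in\mathcal{N}$ and a demand $d^k\ge 0$, and for each arc $(i,j)\in\mathcal{A}$ a capacity $u_{ij}$, a per-unit flow cost $c_{ij}$ and a fixed cost $f_{ij}$, all nonnegative. Let $o_i^k=1$ if $i=o^k$ and $0$ otherwise, $s_i^k=1$ if $i=s^k$ and $0$ otherwise, $\mathcal{N}_i^+=\{j:(i,j)\in\mathcal{A}\}$, $\mathcal{N}_i^-=\{j:(j,i)\in\mathcal{A}\}$. Dispersion: a nonempty set $\mathcal{K}_b\subseteq\mathcal{K}$ of commodities sharing a common origin $o_b$, together with, for every arc $(i,j)\in\mathcal{A}$,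 a partition of $\mathcal{K}_b$ into $\mathcal{K}_b^{ij}$ (aggregated on $(i,j)$) and $\mathcal{D}_b^{ij}$ (disaggregated on $(i,j)$); either part may be empty. Let $\mathcal{G}_b^{ij}$ be the family consisting of the set $\mathcal{K}_b^{ij}$ (if nonempty) together with the singletons $\{k\}$, $k\in\mathcal{D}_b^{ij}$. A partial aggregation is a set $\mathcal{B}$ of dispersions such that every $k\in\mathcal{K}$ lies in $\mathcal{K}_b$ for exactly one $b\in\mathcal{B}$. LP relaxation of PA (for $\mathcal{B}$): variables $x_{ij}^D\ge0$ for $(i,j)\in\mathcal{A}$, $b\in\mathcal{B}$, $D\in\mathcal{G}_b^{ij}$ (since the $\mathcal{K}_b$ are disjoint, $D$ determines $b$), and $0\le y_{ij}\le1$; minimize $\sum_{(i,j)}c_{ij}\sum_{b}\sum_{D\in\mathcal{G}_b^{ij}}x_{ij}^D+\sum_{(i,j)}f_{ij}y_{ij}$ subject to: for all $b\in\mathcal{B}$, $i\in\mathcal{N}$: $\sum_{j\in\mathcal{N}_i^+}\sum_{D\in\mathcal{G}_b^{ij}}x_{ij}^D-\sum_{j\in\mathcal{N}_i^-}\sum_{D\in\mathcal{G}_b^{ji}}x_{ji}^D=\sum_{k\in\mathcal{K}_b}(o_i^k-s_i^k)d^k$; for all $(i,j)$: $\sum_b\sum_{D\in\mathcal{G}_b^{ij}}x_{ij}^D\le u_{ij}y_{ij}$; for all $(i,j),b,D\in\mathcal{G}_b^{ij}$: $x_{ij}^D\le(\sum_{k\in D}d^k)y_{ij}$. FA formulation: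 the full aggregation $\mathcal{B}^f$ has one dispersion for each node $n$ that is the origin of at least one commodity, with $\mathcal{K}_n=\{k\in\mathcal{K}:o^k=n\}$, $\mathcal{K}_n^{ij}=\mathcal{K}_n$ and $\mathcal{D}_n^{ij}=\emptyset$ for every arc; the LP relaxation of FA is the LP relaxation of PA for $\mathcal{B}^f$, with variables $x_{ij}^{\mathcal{K}_n}$ and $y_{ij}$. *)

(* Defs.v *)
From HB Require Import structures.
From mathcomp Require Import all_boot all_order all_algebra.
Set Warnings "-notation-overridden,-ambiguous-paths".

Set Implicit Arguments. Unset Strict Implicit. Unset Printing Implicit Defensive.
Import Order.TTheory GRing.Theory Num.Theory.
Local Open Scope ring_scope.

(* An instance of MCND over an ordered field R: nodes [node], commodities
   [comm], the arc set [arcs] (a set of ordered pairs (i,j)), origin/destination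
   and demand of each commodity, and capacity / unit cost / fixed cost of arcs
   (only their values on [arcs] matter). *)
Record MCND (R : realFieldType) := {
  node : finType;
  comm : finType;
  arcs : {set node * node};
  orig : comm -> node;
  dest : comm -> node;
  dem : comm -> R;
  cap : node * node -> R;
  ucost : node * node -> R;
  fcost : node * node -> R
}.

Arguments node {R} I : rename.
Arguments comm {R} I : rename.
Arguments arcs {R} I : rename.
Arguments orig {R} I _ : rename.
Arguments dest {R} I _ : rename.
Arguments dem {R} I _ : rename.
Arguments cap {R} I _ : rename.
Arguments ucost {R} I _ : rename.
Arguments fcost {R} I _ : rename.

Definition mcnd_ok (R : realFieldType) (I : MCND R) : Prop :=
  (forall k, 0 <= dem I k) /\
  (forall a, a \in arcs I -> [/\ 0 <= cap I a, 0 <= ucost I a & 0 <= fcost I a]).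

(* A family of dispersions, indexed by a finite type [disp]: dispersion b has
   commodity set [Kb b], common origin [ob b], and on arc a the aggregated part
   [agg b a]; the disaggregated part is [Kb b :\: agg b a]. *)
Record PAgg (R : realFieldType) (I : MCND R) := {
  disp : finType;
  Kb : disp -> {set comm I};
  ob : disp -> node I;
  agg : disp -> node I * node I -> {set comm I}
}.

Arguments disp {R I} P : rename.
Arguments Kb {R I} P _ : rename.
Arguments ob {R I} P _ : rename.
Arguments agg {R I} P _ _ : rename.

Definition pagg_ok (R : realFieldType) (I : MCND R) (P : PAgg I) : Prop :=
  [/\ (forall b, Kb P b != set0),
      (forall b k, k \in Kb P b -> orig I k = ob P b),
      (forall b a, agg P b a \subset Kb P b) &
      (forall k, exists b, k \in Kb P b /\ forall b', k \in Kb P b' -> b' = b)].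

Definition groups (R : realFieldType) (I : MCND R) (P : PAgg I)
  (b : disp P) (a : node I * node I) : {set {set comm I}} :=
  (if agg P b a != set0 then [set agg P b a] else set0)
  :|: [set [set k] | k in Kb P b :\: agg P b a].

Arguments groups {R I} P b a : rename.

(* Flow on arc a of dispersion b (sum over D in G_b^a). Variables are
   x a b D, meaningful for D in groups P b a. *)
Definition dflow (R : realFieldType) (I : MCND R) (P : PAgg I)
  (x : node I * node I -> disp P -> {set comm I} -> R) b a : R :=
  \sum_(D in groups P b a) x a b D.

Definition totflow (R : realFieldType) (I : MCND R) (P : PAgg I)
  (x : node I * node I -> disp P -> {set comm I} -> R) a : R :=
  \sum_b dflow x b a.

Definition PA_LP_feasible (R : realFieldType) (I : MCND R) (P : PAgg I)
  (x : node I * node I -> disp P -> {set comm I} -> R)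
  (y : node I * node I -> R) : Prop :=
  [/\ (forall a b D, a \in arcs I -> D \in groups P b a -> 0 <= x a b D),
      (forall a, a \in arcs I -> 0 <= y a <= 1),
      (forall b i,
         \sum_(a in arcs I | a.1 == i) dflow x b a
         - \sum_(a in arcs I | a.2 == i) dflow x b a
         = \sum_(k in Kb P b)
             (((i == orig I k)%:R - (i == dest I k)%:R) * dem I k)),
      (forall a, a \in arcs I -> totflow x a <= cap I a * y a) &
      (forall a b D, a \in arcs I -> D \in groups P b a ->
         x a b D <= (\sum_(k in D) dem I k) * y a)].

Definition PA_LP_obj (R : realFieldType) (I : MCND R) (P : PAgg I)
  (x : node I * node I -> disp P -> {set comm I} -> R)
  (y : node I * node I -> R) : R :=
  \sum_(a in arcs I) ucost I a * totflow x a
  + \sum_(a in arcs I) fcost I a * y a.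

(* Full aggregation: one dispersion per origin node n, K_n = {k | o^k = n},
   fully aggregated on every arc. *)
Definition origins (R : realFieldType) (I : MCND R) : {set node I} :=
  [set orig I k | k : comm I].

Definition Kn (R : realFieldType) (I : MCND R) (n : node I) : {set comm I} :=
  [set k | orig I k == n].

Arguments origins {R} I : rename.
Arguments Kn {R} I n : rename.

Definition FAgg (R : realFieldType) (I : MCND R) : PAgg I := {|
  disp := {n : node I | n \in origins I};
  Kb := fun n => Kn I (val n);
  ob := fun n => val n;
  agg := fun n _ => Kn I (val n)
|}.

(* The map of part (i): x_{ij}^{K_n} = sum_{b : o_b = n} sum_{D in G_b^{ij}} xbar_{ij}^D.
   (Defined for every D; only D = K_n is a variable of FA.) *)
Definition PA_to_FA (R : realFieldType) (I : MCND R) (P : PAgg I)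
  (xb : node I * node I -> disp P -> {set comm I} -> R)
  : node I * node I -> disp (FAgg I) -> {set comm I} -> R :=
  fun a n _ => \sum_(b | ob P b == val n) dflow xb b a.

(* Main.v *)
Set Warnings "-notation-overridden,-ambiguous-paths".
Require Import Defs.
From HB Require Import structures.
From mathcomp Require Import all_boot all_order all_algebra ring lra.
Set Implicit Arguments. Unset Strict Implicit. Unset Printing Implicit Defensive.
Import Order.TTheory GRing.Theory Num.Theory.
Local Open Scope ring_scope.

Section P1.
Variables (R : realFieldType) (I : MCND R) (P : PAgg I).

Lemma groups_full b a : agg P b a = Kb P b -> Kb P b != set0 ->
  groups P b a = [set Kb P b].
Proof.
move=> Ha Hn; rewrite /groups Ha Hn setDv imset0 setU0 //.
Qed.

Lemma sum_groups (h : comm I -> R) b a : agg P b a \subset Kb P b ->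
  \sum_(D in groups P b a) \sum_(k in D) h k = \sum_(k in Kb P b) h k.
Proof.
move=> Hs; rewrite /groups.
have Himg : \sum_(D in [set [set k] | k in Kb P b :\: agg P b a]) \sum_(k in D) h k
   = \sum_(k in Kb P b :\: agg P b a) h k.
  rewrite big_imset /=; last by move=> x y _ _; apply: set1_inj.
  by apply: eq_bigr => k _; rewrite big_set1.
case: eqP => [Heq|/eqP Hne] /=.
  by rewrite set0U Himg Heq setD0.
rewrite big_setU1 /=; last first.
  apply/imsetP => -[k]; rewrite inE => /andP [Hk _] Heq.
  by move: Hk; rewrite Heq inE eqxx.
by rewrite Himg (big_setID (A := Kb P b) (agg P b a)) (setIidPr Hs).
Qed.

End P1.
Section P2.
Variables (R : realFieldType) (I : MCND R) (P : PAgg I).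
Hypothesis HP : pagg_ok P.

Lemma ob_origins b : ob P b \in origins I.
Proof.
case: HP => Hne Horig _ _.
case/set0Pn: (Hne b) => k Hk.
by rewrite -(Horig _ _ Hk); apply/imsetP; exists k.
Qed.

Lemma sum_FA (F : disp P -> R) :
  \sum_(n : disp (FAgg I)) \sum_(b | ob P b == val n) F b = \sum_b F b.
Proof.
rewrite (partition_big (fun b => exist _ (ob P b) (ob_origins b) : disp (FAgg I)) predT) //=.
Qed.

Lemma sum_Kb (n : node I) (g : comm I -> R) :
  \sum_(b | ob P b == n) \sum_(k in Kb P b) g k = \sum_(k in Kn I n) g k.
Proof.
case: HP => _ Horig _ Hpart.
rewrite (exchange_big_dep (fun k => orig I k == n)) /=; last first.
  by move=> b k /eqP <- Hk; rewrite (Horig _ _ Hk).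
apply: eq_big => k; first by rewrite inE.
move=> /= Hkn.
have [b0 [Hb0 Hu]] := Hpart k.
rewrite (bigD1 b0) /=; last by rewrite Hb0 andbT -(Horig _ _ Hb0).
rewrite big1 ?addr0 // => b /andP [/andP [_ Hk'] Hne].
by rewrite (Hu _ Hk') eqxx in Hne.
Qed.

Lemma groups_FA (n : disp (FAgg I)) a : groups (FAgg I) n a = [set Kn I (val n)].
Proof.
apply: groups_full => //=.
case: n => n /= /imsetP [k _ ->]; apply/set0Pn; exists k; by rewrite inE.
Qed.

Variable xb : node I * node I -> disp P -> {set comm I} -> R.

Lemma dflow_FA n a : dflow (PA_to_FA xb) n a = \sum_(b | ob P b == val n) dflow xb b a.
Proof. by rewrite /dflow groups_FA big_set1. Qed.

Lemma totflow_FA a : totflow (PA_to_FA xb) a = totflow xb a.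
Proof.
rewrite /totflow (eq_bigr _ (fun n _ => dflow_FA n a)); exact: sum_FA.
Qed.

Lemma part1 (HI : mcnd_ok I) yb : PA_LP_feasible xb yb ->
       PA_LP_feasible (PA_to_FA xb) yb /\
       PA_LP_obj (PA_to_FA xb) yb = PA_LP_obj xb yb.
Proof.
case=> Hx Hy Hc Hcap Hl; split; last first.
  by rewrite /PA_LP_obj; congr (_ + _); apply: eq_bigr => a _; rewrite totflow_FA.
split => //.
- move=> a n D Ha _; rewrite /PA_to_FA; apply: sumr_ge0 => b _.
  by apply: sumr_ge0 => D' HD'; apply: Hx.
- move=> n i.
  rewrite !(eq_bigr _ (fun a _ => dflow_FA n a)) /=.
  rewrite [X in X - _]exchange_big [X in _ - X]exchange_big /=.
  rewrite -sumrB (eq_bigr _ (fun b _ => Hc b i)).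
  exact: sum_Kb.
- by move=> a Ha; rewrite totflow_FA; apply: Hcap.
- move=> a n D Ha; rewrite groups_FA inE => /eqP ->.
  rewrite /PA_to_FA -sum_Kb mulr_suml; apply: ler_sum => b _.
  case: HP => _ _ Hsub _.
  rewrite -(sum_groups (dem I) (Hsub b a)) mulr_suml; apply: ler_sum => D' HD'.
  exact: Hl.
Qed.
End P2.
Section P3.
Variable R : realFieldType.

Definition a0 : 'I_2 * 'I_2 := (ord0, ord_max).

Definition I0 : MCND R := {| node := 'I_2; comm := bool;
  arcs := [set a0]; orig := fun _ => ord0;
  dest := fun k : bool => if k then ord_max else ord0;
  dem := fun _ => 1; cap := fun _ => 4; ucost := fun _ => 0; fcost := fun _ => 0 |}.

Definition P0 : PAgg I0 := {| disp := bool; Kb := fun b => ([set b] : {set comm I0});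
  ob := fun _ => (ord0 : node I0); agg := fun b _ => ([set b] : {set comm I0}) |}.

Lemma I0_ok : mcnd_ok I0.
Proof. split => //= *; split => //; exact: ler01. Qed.

Lemma P0_ok : pagg_ok P0.
Proof.
split => //=.
- by move=> b; apply/set0Pn; exists b; rewrite inE.
- by move=> k; exists k; split; [rewrite inE | move=> b'; rewrite inE => /eqP].
Qed.

Lemma sum_arcs (F : 'I_2 * 'I_2 -> R) (Q : pred ('I_2 * 'I_2)) :
  \sum_(a in arcs I0 | Q a) F a = if Q a0 then F a0 else 0.
Proof. by rewrite big_mkcondr big_set1. Qed.

Lemma part2 : exists (x : node I0 * node I0 -> disp (FAgg I0) -> {set comm I0} -> R)
            (y : node I0 * node I0 -> R),
       PA_LP_feasible x y /\
       ~ (exists (xb : node I0 * node I0 -> disp P0 -> {set comm I0} -> R)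
                   (yb : node I0 * node I0 -> R), PA_LP_feasible xb yb /\
            (forall a n, a \in arcs I0 ->
               x a n (Kn I0 (val n)) = PA_to_FA xb a n (Kn I0 (val n))) /\
            (forall a, a \in arcs I0 -> y a = yb a)).
Proof.
have Hy : 0 <= (2^-1 : R) <= 1.
  by rewrite invr_ge0 ler0n /= invf_le1 ?ltr0n // ler1n.
have Hn0 : forall n : disp (FAgg I0), val n = ord0.
  by case=> n /= /imsetP [k _ ->].
have HKn : forall n : disp (FAgg I0), Kn I0 (val n) = setT.
  by move=> n; rewrite Hn0; apply/setP => k; rewrite !inE.
have Hdf : forall x n a, dflow (P:=FAgg I0) x n a = x a n (Kn I0 (val n)).
  by move=> x n a; rewrite /dflow groups_FA big_set1.
exists (fun _ _ _ => 1), (fun _ => 2^-1); split.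
  split.
  - by move=> *; exact: ler01.
  - by move=> *.
  - move=> n i; rewrite !(eq_bigr _ (fun a _ => Hdf _ n a)) !sum_arcs.
    change (Kb (FAgg I0) n) with (Kn I0 (val n)); rewrite HKn (eq_bigl predT) ?big_bool /=; last by move=> k; rewrite inE.
    by case: i => -[|[|//]] Hi /=; rewrite /a0 /=; lra.
  - move=> a _; rewrite /totflow (eq_bigr _ (fun n _ => Hdf _ n a)) sumr_const /=.
    have Hc : (#|disp (FAgg I0)| <= 2)%N.
      rewrite card_sig; apply: leq_trans (max_card _) _; by rewrite /= card_ord.
    have : (1 *+ #|disp (FAgg I0)| : R) <= 2 by rewrite ler_nat.
    lra.
  - move=> a n D _; rewrite groups_FA inE => /eqP ->; rewrite HKn (eq_bigl predT) ?big_bool /=; last by move=> k; rewrite inE.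
    lra.
case=> xb [yb [[_ _ Hc _ Hl] [_ Hyy]]].
have := Hc true ord_max.
rewrite !sum_arcs /= big_set1 /=.
have Hg : groups P0 true a0 = [set [set true]].
  by apply: groups_full => //=; apply/set0Pn; exists true; rewrite inE.
have Ha0 : a0 \in arcs I0 by rewrite /= inE.
rewrite /dflow Hg big_set1.
have := Hl a0 true [set true] Ha0; rewrite Hg inE eqxx big_set1 -(Hyy _ Ha0) => /(_ isT).
rewrite /=; lra.
Qed.
End P3.

Theorem theorem4 (R : realFieldType) :
  (forall (I : MCND R) (P : PAgg I), mcnd_ok I -> pagg_ok P ->
     forall (xb : node I * node I -> disp P -> {set comm I} -> R)
            (yb : node I * node I -> R),
       PA_LP_feasible xb yb ->
       PA_LP_feasible (PA_to_FA xb) yb /\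
       PA_LP_obj (PA_to_FA xb) yb = PA_LP_obj xb yb)
  /\
  (exists (I : MCND R) (P : PAgg I), mcnd_ok I /\ pagg_ok P /\
     exists (x : node I * node I -> disp (FAgg I) -> {set comm I} -> R)
            (y : node I * node I -> R),
       PA_LP_feasible x y /\
       ~ (exists (xb : node I * node I -> disp P -> {set comm I} -> R)
                   (yb : node I * node I -> R), PA_LP_feasible xb yb /\
            (forall a n, a \in arcs I ->
               x a n (Kn I (val n)) = PA_to_FA xb a n (Kn I (val n))) /\
            (forall a, a \in arcs I -> y a = yb a))).
Proof.
split.
  move=> I P HI HP xb yb H; exact: part1.
exists (I0 R), (P0 R); split; first exact: I0_ok.
split; first exact: P0_ok.
exact: part2.
Qed.
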